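(* Let $X_1,\ldots,X_m$ ($m\ge 2$) be real-valued square integrable random variables on a common probability space, $\mathbf{X}=(X_1,\ldots,X_m)$. Then the partial linear mean impact $\iota^{lin}_{X_1\mid X_2,\ldots,X_m}$ is free of confounding (with respect to $X_2,\ldots,X_m$) if and only if $E(X_1\mid X_2,\ldots,X_m)$ is (almost surely) a linear function $\beta_0+\sum_{j=2}^m\beta_jX_j$ of $X_2,\ldots,X_m$.
   Context: With $\mathcal{H}^{lin}_1=\{\delta(\mathbf{X})=\eta_0+\sum_{j=1}^m\eta_jX_j:\ E[\delta(\mathbf{X})]=0,\ E[\delta^2(\mathbf{X})]=1,\ E[X_j\delta(\mathbf{X})]=0\ \text{for all } j\ge 2\}$, the partial linear mean impact of $X_1$ on a square integrable random variable $Y$ is $\iota^{lin}_{X_1\mid X_2,\ldots,X_m}(Y)=\sup_{\delta(\mathbf{X})\in\mathcal{H}^{lin}_1}E[Y\delta(\mathbf{X})]$. This parameter is called free of confounding (with respect to $X_2,\ldots,X_m$) if $\iota^{lin}_{X_1\mid X_2,\ldots,X_m}(Y)=0$ for every square integrable random variable $Y$ such that $E(Y\mid\mathbf{X})=g(X_2,\ldots,X_m)$ for some measurable square integrable $g:\mathbb{R}^{m-1}\to\mathbb{R}$ (i.e. $E(Y\mid\mathbf{X})$ is measurable with respect to the $\sigma$-algebra generated by $X_2,\ldots,X_m$). *)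

(* Defs.v *)
From HB Require Import structures.
From mathcomp Require Import all_boot all_order all_algebra.
From mathcomp Require Import all_classical all_reals all_analysis.
Set Implicit Arguments. Unset Strict Implicit. Unset Printing Implicit Defensive.
Import Order.TTheory GRing.Theory Num.Theory.
Local Open Scope classical_set_scope.
Local Open Scope ring_scope.

(* Random variables X_1,...,X_m are represented by X : nat -> T -> R with the
   paper's X_{j+1} being X j, for j < m.  So X_1 = X 0 and X_2..X_m are
   X j for 1 <= j < m. *)

Section defs.
Context {d : measure_display} {T : measurableType d} {R : realType}.
Variable P : probability T R.

Definition sq_integrable (Y : T -> R) : Prop := Y \in Lfun P 2%:E.

Definition sigmaX (X : nat -> T -> R) (I : set nat) : set (set T) :=
  <<s [set A | exists j B, I j /\ measurable B /\ A = X j @^-1` B] >>.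

Definition measurable_wrt (G : set (set T)) (Z : T -> R) : Prop :=
  forall B : set R, measurable B -> G (Z @^-1` B).

Definition is_cond_exp (G : set (set T)) (Y Z : T -> R) : Prop :=
  [/\ measurable_wrt G Z, P.-integrable setT (EFin \o Z) &
      forall A, G A -> (\int[P]_(w in A) (Y w)%:E = \int[P]_(w in A) (Z w)%:E)%E].

Definition Hlin1 (m : nat) (X : nat -> T -> R) : set (T -> R) :=
  [set delta | [/\ exists (eta0 : R) (eta : nat -> R),
                     delta = (fun w => eta0 + \sum_(j < m) eta j * X j w),
                   (expectation P delta = 0)%E,
                   (expectation P (fun w => delta w ^+ 2)%R = 1)%E &
                   forall j, (1 <= j < m)%N -> (expectation P (fun w => X j w * delta w)%R = 0)%E]].

(* partial linear mean impact of X_1 on Y given X_2..X_m;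
   convention: 0 if H^lin_1 is empty *)
Definition partial_lin_impact (m : nat) (X : nat -> T -> R) (Y : T -> R) : \bar R :=
  if `[< Hlin1 m X = set0 >] then 0%E
  else ereal_sup [set expectation P (fun w => Y w * delta w)%R | delta in Hlin1 m X].

Definition free_of_confounding (m : nat) (X : nat -> T -> R) : Prop :=
  forall Y : T -> R, sq_integrable Y ->
    (exists Z : T -> R,
        [/\ is_cond_exp (sigmaX X [set j | (j < m)%N]) Y Z,
            measurable_wrt (sigmaX X [set j | (1 <= j < m)%N]) Z &
            sq_integrable Z]) ->
    partial_lin_impact m X Y = 0%E.

End defs.

(* Main.v *)
Require Import Defs.
Set Implicit Arguments.
Unset Strict Implicit.
From HB Require Import structures.
From mathcomp Require Import all_boot all_order all_algebra.
From mathcomp Require Import all_classical all_reals all_analysis.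
From mathcomp Require Import measurable_realfun.
Import Order.TTheory GRing.Theory Num.Theory.
Local Open Scope classical_set_scope.
Local Open Scope ring_scope.

Section basics.
Context d (T : measurableType d) (R : realType) (P : probability T R).

Definition Er (f : T -> R) : R := fine (\int[P]_w (f w)%:E)%E.

Lemma L2_L1 f : f \in Lfun P 2%:E -> f \in Lfun P 1.
Proof. by apply: Lfun_subset12; apply: fin_num_measure. Qed.

Lemma L1_int f : f \in Lfun P 1 -> P.-integrable setT (EFin \o f).
Proof. by move/Lfun1_integrable. Qed.

Lemma L1_meas f : f \in Lfun P 1 -> measurable_fun setT f.
Proof. by move=> /L1_int /integrableP [/measurable_EFinP]. Qed.

Lemma L2_meas f : f \in Lfun P 2%:E -> measurable_fun setT f.
Proof. by move=> /L2_L1 /L1_meas. Qed.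

Lemma Er_def f : f \in Lfun P 1 -> (\int[P]_w (f w)%:E)%E = (Er f)%:E.
Proof. by move=> /L1_int hf; rewrite /Er fineK // integrable_fin_num. Qed.

Lemma L1D f g : f \in Lfun P 1 -> g \in Lfun P 1 -> (fun w => f w + g w) \in Lfun P 1.
Proof. by move=> hf hg; have := LfunP (Lfun_Sub (@lexx _ _ 1%E) hf + Lfun_Sub (@lexx _ _ 1%E) hg). Qed.
Lemma L1Z a f : f \in Lfun P 1 -> (fun w => a * f w) \in Lfun P 1.
Proof. by move=> hf; have := LfunP (a *: Lfun_Sub (@lexx _ _ 1%E) hf). Qed.
Lemma L1N f : f \in Lfun P 1 -> (fun w => - f w) \in Lfun P 1.
Proof. by move=> hf; have := LfunP (- Lfun_Sub (@lexx _ _ 1%E) hf). Qed.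
Lemma L1B f g : f \in Lfun P 1 -> g \in Lfun P 1 -> (fun w => f w - g w) \in Lfun P 1.
Proof. by move=> hf hg; have := LfunP (Lfun_Sub (@lexx _ _ 1%E) hf - Lfun_Sub (@lexx _ _ 1%E) hg). Qed.
Lemma L1_cst c : (fun _ : T => c) \in Lfun P 1.
Proof. exact: (@Lfun_cst _ _ _ P c 1). Qed.
Lemma L1_sum (I : Type) (r : seq I) (Q : pred I) (F : I -> T -> R) :
  (forall i, Q i -> F i \in Lfun P 1) -> (fun w => \sum_(i <- r | Q i) F i w) \in Lfun P 1.
Proof.
move=> hF; elim: r => [|a r IH].
  have -> : (fun w => \sum_(i <- [::] | Q i) F i w) = (fun _ => 0) by apply/funext => w; rewrite big_nil.
  exact: L1_cst.
rewrite (_ : (fun w => \sum_(i <- a :: r | Q i) F i w) = if Q a then (fun w => F a w + \sum_(i <- r | Q i) F i w) else (fun w => \sum_(i <- r | Q i) F i w)); last by apply/funext => w; rewrite big_cons; case: (Q a).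
case: ifP => Qa; last exact: IH.
exact: L1D (hF _ Qa) IH.
Qed.

Lemma L2D f g : f \in Lfun P 2%:E -> g \in Lfun P 2%:E -> (fun w => f w + g w) \in Lfun P 2%:E.
Proof. by move=> hf hg; have := LfunP (Lfun_Sub (lee1n 2) hf + Lfun_Sub (lee1n 2) hg). Qed.
Lemma L2Z a f : f \in Lfun P 2%:E -> (fun w => a * f w) \in Lfun P 2%:E.
Proof. by move=> hf; have := LfunP (a *: Lfun_Sub (lee1n 2) hf). Qed.
Lemma L2N f : f \in Lfun P 2%:E -> (fun w => - f w) \in Lfun P 2%:E.
Proof. by move=> hf; have := LfunP (- Lfun_Sub (lee1n 2) hf). Qed.
Lemma L2B f g : f \in Lfun P 2%:E -> g \in Lfun P 2%:E -> (fun w => f w - g w) \in Lfun P 2%:E.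
Proof. by move=> hf hg; have := LfunP (Lfun_Sub (lee1n 2) hf - Lfun_Sub (lee1n 2) hg). Qed.
Lemma L2_cst c : (fun _ : T => c) \in Lfun P 2%:E.
Proof. exact: (@Lfun_cst _ _ _ P c 2). Qed.
Lemma L2_sum (I : Type) (r : seq I) (Q : pred I) (F : I -> T -> R) :
  (forall i, Q i -> F i \in Lfun P 2%:E) -> (fun w => \sum_(i <- r | Q i) F i w) \in Lfun P 2%:E.
Proof.
move=> hF; elim: r => [|a r IH].
  have -> : (fun w => \sum_(i <- [::] | Q i) F i w) = (fun _ => 0) by apply/funext => w; rewrite big_nil.
  exact: L2_cst.
rewrite (_ : (fun w => \sum_(i <- a :: r | Q i) F i w) = if Q a then (fun w => F a w + \sum_(i <- r | Q i) F i w) else (fun w => \sum_(i <- r | Q i) F i w)); last by apply/funext => w; rewrite big_cons; case: (Q a).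
case: ifP => Qa; last exact: IH.
exact: L2D (hF _ Qa) IH.
Qed.
Lemma L2M f g : f \in Lfun P 2%:E -> g \in Lfun P 2%:E -> (fun w => f w * g w) \in Lfun P 1.
Proof. by move=> hf hg; have := Lfun2_mul_Lfun1 hf hg. Qed.

Lemma ErD f g : f \in Lfun P 1 -> g \in Lfun P 1 ->
  Er (fun w => f w + g w) = Er f + Er g.
Proof.
move=> hf hg; apply: EFin_inj; rewrite -Er_def ?EFinD -?Er_def //; last exact: L1D.
by rewrite -integralD_EFin //; exact: L1_int.
Qed.

Lemma ErZ a f : f \in Lfun P 1 -> Er (fun w => a * f w) = a * Er f.
Proof.
move=> hf; apply: EFin_inj; rewrite -Er_def ?EFinM -?Er_def //; last exact: L1Z.
by rewrite -integralZl //; exact: L1_int.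
Qed.

Lemma ErN f : f \in Lfun P 1 -> Er (fun w => - f w) = - Er f.
Proof.
move=> hf; rewrite -mulN1r -ErZ //; congr Er; apply/funext => w; by rewrite mulN1r.
Qed.

Lemma ErB f g : f \in Lfun P 1 -> g \in Lfun P 1 ->
  Er (fun w => f w - g w) = Er f - Er g.
Proof. by move=> hf hg; rewrite ErD ?ErN //; exact: L1N. Qed.

Lemma Er_cst c : Er (fun _ => c) = c.
Proof. by rewrite /Er integral_cst //= probability_setT mule1. Qed.

Lemma Er_sum (I : Type) (r : seq I) (Q : pred I) (F : I -> T -> R) :
  (forall i, Q i -> F i \in Lfun P 1) ->
  Er (fun w => \sum_(i <- r | Q i) F i w) = \sum_(i <- r | Q i) Er (F i).
Proof.
move=> hF; elim: r => [|a r IH].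
  have -> : (fun w => \sum_(i <- [::] | Q i) F i w) = (fun _ => 0) by apply/funext => w; rewrite big_nil.
  by rewrite big_nil Er_cst.
rewrite (_ : (fun w => \sum_(i <- a :: r | Q i) F i w) = (fun w => if Q a then F a w + \sum_(i <- r | Q i) F i w else \sum_(i <- r | Q i) F i w)); last by apply/funext => w; rewrite big_cons.
rewrite big_cons; case: ifP => Qa; last exact: IH.
by rewrite ErD ?IH //; [exact: hF | exact: L1_sum].
Qed.

Lemma Er_ext f g : f =1 g -> Er f = Er g.
Proof. by move=> /funext ->. Qed.

End basics.

From mathcomp Require Import ring lra.

Lemma zmod_rearr (V : zmodType) (x p q r : V) : x - p - (r - q) = x - r + (q - p).
Proof. by rewrite opprB !addrA [LHS]addrAC [X in X + q]addrAC [RHS]addrAC. Qed.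

Section proj.
Context (R : realFieldType) (V : lmodType R) (B : V -> V -> R).
Hypothesis Bsym : forall u v, B u v = B v u.
Hypothesis BD : forall u v w, B (u + v) w = B u w + B v w.
Hypothesis BZ : forall a u w, B (a *: u) w = a * B u w.
Hypothesis Bpos : forall u, 0 <= B u u.

Lemma BN u w : B (- u) w = - B u w.
Proof. by rewrite -scaleN1r BZ mulN1r. Qed.
Lemma BB u v w : B (u - v) w = B u w - B v w.
Proof. by rewrite BD BN. Qed.
Lemma Bsum n (F : 'I_n -> V) w : B (\sum_(i < n) F i) w = \sum_(i < n) B (F i) w.
Proof.
elim: n F => [|n IH] F.
  by rewrite !big_ord0 -(scale0r (0 : V)) BZ mul0r.
by rewrite !big_ord_recr /= BD IH.
Qed.
Lemma BDr u v w : B w (u + v) = B w u + B w v.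
Proof. by rewrite Bsym BD !(Bsym w). Qed.
Lemma BZr a u w : B w (a *: u) = a * B w u.
Proof. by rewrite Bsym BZ Bsym. Qed.

Lemma BNr u w : B w (- u) = - B w u.
Proof. by rewrite Bsym BN Bsym. Qed.
Lemma BBr u v w : B w (u - v) = B w u - B w v.
Proof. by rewrite BDr BNr. Qed.
Lemma Bsumr n (F : 'I_n -> V) w : B w (\sum_(i < n) F i) = \sum_(i < n) B w (F i).
Proof. by rewrite Bsym Bsum; apply: eq_bigr => i _; rewrite Bsym. Qed.

Lemma B_null y w : B w w = 0 -> B y w = 0.
Proof.
move=> ww; apply/eqP/negPn/negP => hb.
set a := B y y; set b := B y w.
set t := - (a + 1) / (2 * b).
have tb : t * b = - (a + 1) / 2 by rewrite /t invfM mulrA mulfVK.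
have := Bpos (y + t *: w).
rewrite BD !BDr !BZ !BZr ww (Bsym w y) -/a -/b mulr0 mulr0 addr0 tb.
have ha : 0 <= a by exact: Bpos.
lra.
Qed.

Lemma proj_exists (s : seq V) (x : V) :
  exists c : nat -> R, forall i, (i < size s)%N ->
    B (x - \sum_(k < size s) c k *: s`_k) s`_i = 0.
Proof.
elim: s x => [|v s IH] x.
  by exists (fun _ => 0) => i.
have [a ha] := IH x; have [b hb] := IH v.
set y1 := x - \sum_(k < size s) a k *: s`_k in ha.
set w := v - \sum_(k < size s) b k *: s`_k in hb.
have hyw : forall i, (i < size s)%N -> B w s`_i = 0 := hb.
have Bv : forall z, (forall i, (i < size s)%N -> B z s`_i = 0) -> B z v = B z w.
  move=> z hz; rewrite /w BBr Bsumr big1 ?subr0 // => i _.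
  by rewrite BZr hz ?mulr0.
have [ww0|wwn0] := eqVneq (B w w) 0.
- exists (fun k => if k is k'.+1 then a k' else 0) => i.
  rewrite /= big_ord_recl /= scale0r add0r -/y1.
  case: i => [_|i] /=; last by apply: ha.
  by rewrite Bv // B_null.
- set k0 := B y1 w / B w w.
  exists (fun k => if k is k'.+1 then a k' - k0 * b k' else k0) => i.
  have -> : x - \sum_(k < size (v :: s)) (fun k => if k is k'.+1 then a k' - k0 * b k' else k0) k *: (v :: s)`_k = y1 - k0 *: w.
    rewrite /= big_ord_recl /= /y1 /w.
    under eq_bigr do rewrite add0n scalerBl -scalerA.
    rewrite sumrB -scaler_sumr scalerBr.
    set SA := \sum_(_ < _) _ *: _; set SB := \sum_(_ < _) _ *: _.
    rewrite opprB opprD addrA.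
    move: (k0 *: v) (k0 *: SB) SA => p q r.
    by rewrite opprB !addrA [LHS]addrAC [X in X + q]addrAC [RHS]addrAC.
  have hz : forall i, (i < size s)%N -> B (y1 - k0 *: w) s`_i = 0.
    by move=> j hj; rewrite BB BZ ha // hyw // mulr0 subr0.
  case: i => [_|i] /=; last by apply: hz.
  rewrite Bv // BB BZ /k0 mulfVK //; exact: subrr.
Qed.

End proj.

Import HBNNSimple.
Section transfer.
Context d (T : measurableType d) (R : realType) (P : probability T R).
Variable gen : set (set T).
Hypothesis hgen : forall A, <<s gen >> A -> measurable A.
Local Notation T' := (g_sigma_algebraType gen).

Lemma measT'T (f : T' -> R) : measurable_fun (setT : set T') f ->
  measurable_fun (setT : set T) (f : T -> R).
Proof.
move=> mf _ B mB; rewrite setTI; apply: hgen.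
by have := mf measurableT B mB; rewrite setTI.
Qed.

Lemma int_nnsfun (D : T -> R) (mD : measurable_fun setT D) (D0 : forall x, 0 <= D x)
  (h : {nnsfun T' >-> R}) :
  (\int[P]_x ((D x)%:E * (h x)%:E) =
  \sum_(r \in range h) (r%:E * \int[P]_(x in (h @^-1` [set r] : set T)) (D x)%:E))%E.
Proof.
have mh r : measurable (h @^-1` [set r] : set T).
  by apply: hgen; exact: (measurable_sfunP h (measurable_set1 r)).
transitivity (\int[P]_x (\sum_(r \in range h)
    ((D x)%:E * (r%:E * (\1_(h @^-1` [set r]) x)%:E))))%E.
  apply: eq_integral => x _; rewrite [h x]fimfunE -fsumEFin; last exact: fimfunP.
  rewrite ge0_mule_fsumr; last by move=> r; exact: nnfun_muleindic_ge0.
  by apply: eq_fsbigr => r _; rewrite EFinM.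
rewrite ge0_integral_fsum //; first last.
- move=> r x _; apply: mule_ge0; first by rewrite lee_fin.
  exact: nnfun_muleindic_ge0.
- move=> r; apply/measurable_EFinP => /=.
  apply: measurable_funM => //; apply: measurable_funM => //.
apply: eq_fsbigr => r /[!inE] -[x0 _ <-].
under eq_integral do rewrite muleCA.
rewrite ge0_integralZl //; first last.
- by rewrite lee_fin.
- by move=> x _; rewrite -EFinM lee_fin mulr_ge0 // indicE.
- apply/measurable_EFinP => /=; apply: measurable_funM => //.

congr (_ * _)%E; rewrite [RHS]integral_mkcond; apply: eq_integral => x _.
by rewrite /patch indicE; case: ifP; rewrite ?mule1 ?mule0.
Qed.

Lemma transfer (D1 D2 : T -> R) (f : T -> R) :
  measurable_fun setT D1 -> measurable_fun setT D2 ->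
  (forall x, 0 <= D1 x) -> (forall x, 0 <= D2 x) ->
  (forall A, <<s gen >> A ->
     \int[P]_(x in A) (D1 x)%:E = \int[P]_(x in A) (D2 x)%:E)%E ->
  measurable_fun (setT : set T') (f : T' -> R) -> (forall x, 0 <= f x) ->
  (\int[P]_x ((D1 x)%:E * (f x)%:E) = \int[P]_x ((D2 x)%:E * (f x)%:E))%E.
Proof.
move=> mD1 mD2 D10 D20 hA mf f0.
have mf' : measurable_fun (setT : set T') (EFin \o f) by exact/measurable_EFinP.
pose g := nnsfun_approx (@measurableT _ T') mf'.
have key (D : T -> R) : measurable_fun setT D -> (forall x, 0 <= D x) ->
   (\int[P]_x ((D x)%:E * (f x)%:E) =
    limn (fun n => \int[P]_x ((D x)%:E * (g n x)%:E)))%E.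
  move=> mD D0; rewrite -monotone_convergence //; first last.
  - move=> x _ a b ab; apply: lee_pmul => //; rewrite ?lee_fin //.
    by have /lefP := nd_nnsfun_approx (@measurableT _ T') mf' ab; apply.
  - by move=> n x _; apply: mule_ge0; rewrite lee_fin.
  - move=> n; apply/measurable_EFinP => /=; apply: measurable_funM => //.
    by apply: measT'T.
  apply: eq_integral => x _; apply/esym/cvg_lim => //.
  apply: cvgeZl => //; apply: cvg_nnsfun_approx => //= y _.
  by rewrite lee_fin.
rewrite key // [RHS]key //.
suff -> : (fun n => \int[P]_x ((D1 x)%:E * (g n x)%:E))%E =
  (fun n => \int[P]_x ((D2 x)%:E * (g n x)%:E))%E by [].
apply/funext => n.
rewrite !int_nnsfun //; apply: eq_fsbigr => r _; congr (_ * _)%E.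
apply: hA; exact: (measurable_sfunP (g n) (measurable_set1 r)).
Qed.

End transfer.

Lemma maxEFin (R : realType) (a b : R) : Order.max a%:E b%:E = (Order.max a b)%:E.
Proof. by rewrite !maxEle lee_fin; case: ifP. Qed.

Lemma sube0_eq (R : realType) (a b : \bar R) : (a - b = 0)%E -> a = b.
Proof.
case: a => [a||]; case: b => [b||] //=.
by move=> /eqP; rewrite -EFinB eqe subr_eq0 => /eqP ->.
Qed.

Lemma fine_subee (R : realType) (a : \bar R) : fine (a - a)%E = 0.
Proof. by case: a => [a||] //=; rewrite subrr. Qed.

Section condexp.
Context d (T : measurableType d) (R : realType) (P : probability T R).
Variable gen : set (set T).
Hypothesis hgen : forall A, <<s gen >> A -> measurable A.
Local Notation T' := (g_sigma_algebraType gen).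

Let pp (r : R) := Order.max r 0.
Let np (r : R) := Order.max (- r) 0.

Let pp_ge0 r : 0 <= pp r. Proof. by rewrite /pp le_max lexx orbT. Qed.
Let np_ge0 r : 0 <= np r. Proof. by rewrite /np le_max lexx orbT. Qed.

Let posE (g : T -> R) x : ((EFin \o g)^\+)%E x = (pp (g x))%:E.
Proof. by rewrite funeposE /= maxEFin. Qed.
Let negE (g : T -> R) x : ((EFin \o g)^\-)%E x = (np (g x))%:E.
Proof. by rewrite funenegE /= maxEFin. Qed.

Let ppP (r : R) : 0 <= r -> pp r = r /\ np r = 0.
Proof. by move=> h; rewrite /pp /np max_l // max_r // oppr_le0. Qed.
Let npP (r : R) : r <= 0 -> pp r = 0 /\ np r = - r.
Proof. by move=> h; rewrite /pp /np max_r // max_l // oppr_ge0. Qed.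
Let ppB (r : R) : r = pp r - np r.
Proof. by case: (leP 0 r) => h; [have [-> ->] := ppP h | have [-> ->] := npP (ltW h)]; rewrite ?subr0 ?sub0r ?opprK. Qed.

Let ppM (a b : R) : pp (a * b) = pp a * pp b + np a * np b /\
              np (a * b) = pp a * np b + np a * pp b.
Proof.
case: (leP 0 a) => ha; case: (leP 0 b) => hb.
- have [-> ->] := ppP ha; have [-> ->] := ppP hb.
  by have [-> ->] := ppP (mulr_ge0 ha hb); split; ring.
- have [-> ->] := ppP ha; have [-> ->] := npP (ltW hb).
  by have [-> ->] := npP (mulr_ge0_le0 ha (ltW hb)); split; ring.
- have [-> ->] := npP (ltW ha); have [-> ->] := ppP hb.
  by have [-> ->] := npP (mulr_le0_ge0 (ltW ha) hb); split; ring.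
- have [-> ->] := npP (ltW ha); have [-> ->] := npP (ltW hb).
  by have [-> ->] := ppP (mulr_le0 (ltW ha) (ltW hb)); split; ring.
Qed.

Let ppM1 (a b : R) : Order.max (a * b) 0 = pp a * pp b + np a * np b.
Proof. exact: (proj1 (ppM a b)). Qed.
Let ppM2 (a b : R) : Order.max (- (a * b)) 0 = pp a * np b + np a * pp b.
Proof. exact: (proj2 (ppM a b)). Qed.

Let m_pp d0 (T0 : measurableType d0) (g : T0 -> R) : measurable_fun setT g ->
  measurable_fun setT (fun x => pp (g x)).
Proof.
move=> mg; have := measurable_maxr mg (measurable_cst (0:R)).
by apply: eq_measurable_fun => x _.
Qed.
Let m_np d0 (T0 : measurableType d0) (g : T0 -> R) : measurable_fun setT g ->
  measurable_fun setT (fun x => np (g x)).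
Proof.
move=> mg; have := measurable_maxr (measurable_funN mg) (measurable_cst (0:R)).
by apply: eq_measurable_fun => x _.
Qed.

Lemma condexp_mul (Y W f : T -> R) :
  Y \in Lfun P 1 -> W \in Lfun P 1 ->
  (fun w => Y w * f w) \in Lfun P 1 -> (fun w => W w * f w) \in Lfun P 1 ->
  (forall A, <<s gen >> A ->
     (\int[P]_(x in A) (Y x)%:E = \int[P]_(x in A) (W x)%:E)%E) ->
  measurable_fun (setT : set T') (f : T' -> R) ->
  Er P (fun w => Y w * f w) = Er P (fun w => W w * f w).
Proof.
move=> hY hW hYf hWf hA mf.
set D := fun w => Y w - W w.
have hD : D \in Lfun P 1 by exact: L1B.
have mD : measurable_fun setT D by exact: L1_meas hD.
have mfT : measurable_fun (setT : set T) f by exact: (measT'T hgen mf).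
have hDA : forall A, <<s gen >> A ->
    (\int[P]_(x in A) (pp (D x))%:E = \int[P]_(x in A) (np (D x))%:E)%E.
  move=> A GA; have mA := hgen GA.
  have iY := integrableS measurableT mA (@subsetT _ A) (L1_int hY).
  have iW := integrableS measurableT mA (@subsetT _ A) (L1_int hW).
  have : (\int[P]_(x in A) (D x)%:E = 0)%E.
    under eq_integral do rewrite EFinB.
    rewrite (integralB_EFin mA iY iW) hA // subee //.
    exact: integrable_fin_num iW.
  rewrite integralE => /sube0_eq.
  by under eq_integral do rewrite funeposE /= maxEFin;
     under [RHS]eq_integral do rewrite funenegE /= maxEFin.
have key (h : T -> R) : measurable_fun (setT : set T') (h : T' -> R) ->
    (forall x, 0 <= h x) ->
    (\int[P]_x ((pp (D x))%:E * (h x)%:E) = \int[P]_x ((np (D x))%:E * (h x)%:E))%E.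
  move=> mh h0; apply: (transfer hgen) => //; [exact: m_pp|exact: m_np].
apply/eqP; rewrite -subr_eq0 -ErB //; apply/eqP.
have -> : (fun w => Y w * f w - W w * f w) = (fun w => D w * f w).
  by apply/funext => w; rewrite /D mulrBl.
rewrite /Er integralE.
under eq_integral do rewrite funeposE /= maxEFin ppM1 EFinD !EFinM.
under [X in (_ - X)%E]eq_integral do rewrite funenegE /= maxEFin ppM2 EFinD !EFinM.
have mppf := m_pp mf; have mnpf := m_np mf.
rewrite !ge0_integralD //.
- have k1 := key (fun x => pp (f x)) mppf (fun x => pp_ge0 _).
  have k2 := key (fun x => np (f x)) mnpf (fun x => np_ge0 _).
  cbv beta in k1; cbv beta in k2; rewrite k1 k2.
  by rewrite [X in (_ - X)%E]addeC fine_subee.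
all: try (by move=> x _; apply: mule_ge0; rewrite lee_fin).
all: apply: emeasurable_funM; apply/measurable_EFinP.
all: by [apply: m_pp | apply: m_np].
Qed.

End condexp.

Section helpers.
Context d (T : measurableType d) (R : realType) (P : probability T R).

Lemma expE (f : T -> R) : f \in Lfun P 1 -> expectation P f = (Er P f)%:E.
Proof. by move=> hf; rewrite unlock Er_def. Qed.

Lemma int_indic (A : set T) (f : T -> R) : measurable A ->
  (\int[P]_(x in A) (f x)%:E = \int[P]_x (f x * \1_A x)%:E)%E.
Proof.
move=> mA; rewrite integral_mkcond; apply: eq_integral => x _.
by rewrite /patch indicE; case: ifP => _; rewrite ?mulr1 ?mulr0.
Qed.

Lemma L2_indic (A : set T) : measurable A -> (\1_A : T -> R) \in Lfun P 2%:E.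
Proof.
move=> mA; rewrite inE; apply/andP; split.
  by rewrite inE /=; exact: measurable_indic.
rewrite inE /= /finite_norm unlock poweR_lty //.
have h1 : forall x, (`|(EFin \o (\1_A : T -> R)) x| `^ 2 = (\1_A x)%:E :> \bar R)%E.
  move=> x; rewrite /=; congr EFin; rewrite indicE.
  by case: (x \in A); rewrite ?normr1 ?normr0 ?powR1 ?powR0.
under eq_integral => x _ do rewrite h1.
rewrite integral_indic // setIT.
by apply: (le_lt_trans (probability_le1 P mA)); rewrite ltry.
Qed.

Lemma sq0_ae (g : T -> R) : g \in Lfun P 2%:E -> Er P (fun w => g w * g w) = 0 ->
  ae_eq P setT (EFin \o g) (cst 0%E).
Proof.
move=> hg h0.
have mg := L2_meas hg.
have hgg := L2M hg hg.
have h2 : (\int[P]_x ((g x * g x)%:E) = 0)%E by rewrite Er_def // h0.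
have h3 : ae_eq P setT (EFin \o (fun x => g x * g x)) (cst 0%E).
  apply/ae_eq_integral_abs => //.
    by apply/measurable_EFinP; exact: measurable_funM.
  rewrite -h2; apply: eq_integral => x _.
  by rewrite /= normrM -expr2 real_normK ?num_real // -expr2.
apply: filterS h3 => x h _; have := h I.
by move=> /= /eqP; rewrite eqe mulf_eq0 orbb => /eqP ->.
Qed.

End helpers.

Lemma measurable_sum_seq d0 (T0 : measurableType d0) (R : realType) (I : eqType)
  (s : seq I) (F : I -> T0 -> R) :
  (forall i, i \in s -> measurable_fun setT (F i)) ->
  measurable_fun setT (fun w => \sum_(i <- s) F i w).
Proof.
elim: s => [|a s IH] hF.
  by under eq_fun do rewrite big_nil; exact: measurable_cst.
under eq_fun do rewrite big_cons.
apply: measurable_funD; first by apply: hF; rewrite mem_head.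
by apply: IH => i hi; apply: hF; rewrite inE hi orbT.
Qed.

Section sigmaX.
Context d (T : measurableType d) (R : realType).
Variable X : nat -> T -> R.

Definition genX (I : set nat) : set (set T) :=
  [set A | exists j B, I j /\ measurable B /\ A = X j @^-1` B].

Lemma sigmaXE I : sigmaX X I = <<s genX I >>.
Proof. by []. Qed.

Lemma sigmaX_meas I : (forall j, I j -> measurable_fun setT (X j)) ->
  forall A, <<s genX I >> A -> measurable A.
Proof.
move=> hX; apply: smallest_sub; first exact: sigma_algebra_measurable.
move=> A [j [B [Ij [mB ->]]]]; rewrite -(setTI (X j @^-1` B)).
exact: (hX j Ij measurableT B mB).
Qed.

Lemma wrtE I (Z : T -> R) : measurable_wrt (sigmaX X I) Z <->
  measurable_fun (setT : set (g_sigma_algebraType (genX I))) Z.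
Proof.
split => h.
  by move=> _ B mB; rewrite setTI; exact: h.
by move=> B mB; have := h measurableT B mB; rewrite setTI.
Qed.

Lemma X_T' I j : I j -> measurable_fun (setT : set (g_sigma_algebraType (genX I))) (X j).
Proof.
move=> Ij _ B mB; rewrite setTI; apply: sub_sigma_algebra.
by exists j, B.
Qed.

Lemma sigmaX_mono I J : I `<=` J -> <<s genX I >> `<=` <<s genX J >>.
Proof.
move=> IJ; apply: sub_sigma_algebra2 => A [j [B [Ij [mB ->]]]].
by exists j, B; split => //; exact: IJ.
Qed.

Lemma lin_T' I (c0 : R) (c : nat -> R) (s : seq nat) :
  (forall j, j \in s -> I j) ->
  measurable_fun (setT : set (g_sigma_algebraType (genX I)))
    (fun w => c0 + \sum_(j <- s) c j * X j w).
Proof.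
move=> hs; apply: measurable_funD; first exact: measurable_cst.
apply: measurable_sum_seq => j /hs Ij.
by apply: measurable_funM; [exact: measurable_cst | exact: X_T'].
Qed.

End sigmaX.

Section projL2.
Context d (T : measurableType d) (R : realType) (P : probability T R).
Local Notation V := (LfunType P (lee1n 2)).

Lemma val_sum n (F : 'I_n -> V) (w : T) :
  ((\sum_(k < n) F k : V) : T -> R) w = \sum_(k < n) (F k : T -> R) w.
Proof.
elim: n F => [|n IH] F; first by rewrite !big_ord0.
by rewrite !big_ord_recr /= -IH.
Qed.

Lemma valZ (a : R) (u : V) (w : T) : ((a *: u : V) : T -> R) w = a * (u : T -> R) w.
Proof. by []. Qed.

Let B (u v : V) : R := Er P (fun w => (u : T -> R) w * (v : T -> R) w).

Let BD u v z : B (u + v) z = B u z + B v z.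
Proof.
rewrite /B -ErD; try by apply: L2M; exact: LfunP.
by congr Er; apply/funext => w /=; rewrite mulrDl.
Qed.

Let BZ a u z : B (a *: u) z = a * B u z.
Proof.
rewrite /B -ErZ; last by apply: L2M; exact: LfunP.
by congr Er; apply/funext => w /=; rewrite mulrA.
Qed.

Let Bsym u v : B u v = B v u.
Proof. by rewrite /B; congr Er; apply/funext => w; rewrite mulrC. Qed.

Let Bpos u : 0 <= B u u.
Proof.
rewrite /B /Er; apply: fine_ge0; apply: integral_ge0 => x _.
by rewrite lee_fin -expr2 sqr_ge0.
Qed.

Lemma proj_L2 (m : nat) (X : nat -> T -> R) : (0 < m)%N ->
  (forall j, (j < m)%N -> X j \in Lfun P 2%:E) ->
  exists c : nat -> R,
    let r := fun w => X 0%N w - (c 0%N + \sum_(1 <= j < m) c j * X j w) in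
    Er P r = 0 /\ forall j, (1 <= j < m)%N -> Er P (fun w => X j w * r w) = 0.
Proof.
move=> m0 hX.
pose Zf (j : nat) : T -> R := if j == 0%N then (fun _ => 1) else X j.
have hZ j : (j < m)%N -> Zf j \in Lfun P 2%:E.
  by rewrite /Zf; case: eqP => _ hj; [exact: L2_cst | exact: hX].
pose s := mkseq (fun j => insubd (0 : V) (Zf j)) m.
pose x := insubd (0 : V) (X 0%N).
have [c hc] := proj_exists Bsym BD BZ Bpos s x.
exists c => r.
have sz : size s = m by rewrite size_mkseq.
have sE k : (k < m)%N -> ((s`_k : V) : T -> R) = Zf k.
  by move=> hk; rewrite nth_mkseq // insubdK //; exact: hZ.
have rE : ((x - \sum_(k < size s) c k *: s`_k : V) : T -> R) = r.
  apply/funext => w.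
  transitivity ((x : T -> R) w - ((\sum_(k < size s) c k *: s`_k : V) : T -> R) w); first by [].
  rewrite val_sum /= insubdK; last exact: hX.
  rewrite /r; congr (_ - _).
  rewrite sz -(big_mkord xpredT (fun k => ((c k *: s`_k : V) : T -> R) w)).
  rewrite (big_ltn m0) /=.
  rewrite -[X in X + _ = _]/(c 0%N * ((s`_0 : V) : T -> R) w) sE // /Zf /= mulr1; congr (_ + _).
  apply: eq_big_nat => k /andP[k1 km].
  rewrite -[LHS]/(c k * ((s`_k : V) : T -> R) w) sE // /Zf.
  by case: eqP => // k0; move: k1; rewrite k0.
have h i : (i < m)%N -> Er P (fun w => r w * Zf i w) = 0.
  move=> hi; have hi' : (i < size s)%N by rewrite sz.
  by have := hc i hi'; rewrite /B rE sE.
split.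
  have := h 0%N m0; rewrite /Zf /=.
  by under eq_fun do rewrite mulr1.
move=> j /andP[j1 jm]; have := h j jm; rewrite /Zf.
case: eqP => [j0|_]; first by move: j1; rewrite j0.
by under eq_fun do rewrite mulrC.
Qed.

End projL2.

Section lin.
Context d (T : measurableType d) (R : realType) (P : probability T R).
Variables (m : nat) (X : nat -> T -> R).
Hypothesis hX : forall j, (j < m)%N -> X j \in Lfun P 2%:E.

Lemma L2_lin (c0 : R) (c : nat -> R) (a : nat) :
  (fun w => c0 + \sum_(a <= j < m) c j * X j w) \in Lfun P 2%:E.
Proof.
apply: L2D; first exact: L2_cst.
under eq_fun do rewrite big_seq.
apply: L2_sum => j; rewrite mem_index_iota => /andP[_ jm].
exact: L2Z (hX jm).
Qed.

Lemma L2_linO (c0 : R) (c : nat -> R) :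
  (fun w => c0 + \sum_(j < m) c j * X j w) \in Lfun P 2%:E.
Proof.
under eq_fun do rewrite -(big_mkord xpredT (fun j => c j * X j _)).
exact: L2_lin.
Qed.

Lemma orth_lin (v : T -> R) (c0 : R) (c : nat -> R) :
  v \in Lfun P 2%:E -> Er P v = 0 ->
  (forall j, (1 <= j < m)%N -> Er P (fun w => X j w * v w) = 0) ->
  Er P (fun w => (c0 + \sum_(1 <= j < m) c j * X j w) * v w) = 0.
Proof.
move=> hv hv0 hvj.
have -> : (fun w => (c0 + \sum_(1 <= j < m) c j * X j w) * v w) =
  (fun w => c0 * v w + \sum_(j <- index_iota 1 m | j \in index_iota 1 m) c j * (X j w * v w)).
  apply/funext => w; rewrite mulrDl mulr_suml -big_seq; congr (_ + _).
  by apply: eq_bigr => j _; rewrite mulrA.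
rewrite ErD; first last.
- apply: L1_sum => j; rewrite mem_index_iota => /andP[_ jm].
  by apply: L1Z; apply: L2M (hX jm) hv.
- by apply: L1Z; exact: L2_L1.
rewrite ErZ ?hv0 ?mulr0 ?add0r; last exact: L2_L1.
rewrite Er_sum; last first.
  move=> j; rewrite mem_index_iota => /andP[_ jm].
  by apply: L1Z; apply: L2M (hX jm) hv.
rewrite big1 // => j; rewrite mem_index_iota => hj.
rewrite ErZ ?hvj ?mulr0 //.
by case/andP: hj => _ jm; apply: L2M (hX jm) hv.
Qed.

End lin.

Lemma Er_ae0 d (T : measurableType d) (R : realType) (P : probability T R)
  (g h : T -> R) : g \in Lfun P 2%:E -> Er P (fun w => g w * g w) = 0 ->
  measurable_fun setT h -> Er P (fun w => h w * g w) = 0.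
Proof.
move=> hg hgg mh; have hae := sq0_ae hg hgg.
rewrite /Er (ae_eq_integral (cst 0%E)) //; first by rewrite integral0.
- by apply/measurable_EFinP; apply: measurable_funM => //; exact: (L2_meas hg).
- case: hae => N [mN PN hN]; exists N; split => // x /= hx; apply: hN => /=.
  move=> hgx; apply: hx => _; move: (hgx I).
  by move=> [->]; rewrite mulr0.
Qed.

Section main.
Context d (T : measurableType d) (R : realType) (P : probability T R).
Variables (m : nat) (X : nat -> T -> R).
Hypothesis hm : (2 <= m)%N.
Hypothesis hX : forall j, (j < m)%N -> sq_integrable P (X j).

Let m0 : (0 < m)%N. Proof. exact: leq_trans hm. Qed.
Let I0 := [set j | (j < m)%N].
Let I1 := [set j | (1 <= j < m)%N].
Let hg0 : forall A, <<s genX X I0 >> A -> measurable A.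
Proof. by apply: sigmaX_meas => j hj; exact: L2_meas (hX hj). Qed.
Let hg1 : forall A, <<s genX X I1 >> A -> measurable A.
Proof.
apply: sigmaX_meas => j /andP[_ hj]; exact: L2_meas (hX hj).
Qed.
Let hX0 : X 0%N \in Lfun P 2%:E. Proof. exact: hX m0. Qed.

Let EfE (f : T -> R) : f \in Lfun P 1 -> expectation P f = 0%E -> Er P f = 0.
Proof. by move=> hf; rewrite expE // => -[]. Qed.

Lemma dir_back : (exists (beta0 : R) (beta : nat -> R),
    is_cond_exp P (sigmaX X [set j | (1 <= j < m)%N]) (X 0%N)
      (fun w => beta0 + \sum_(1 <= j < m) beta j * X j w)) ->
  free_of_confounding P m X.
Proof.
move=> [b0 [b [mL iL hLA]]] Y hY [Z [[mZ iZ hZA] mZ1 hZ2]].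
set L := fun w => b0 + \sum_(1 <= j < m) b j * X j w in mL iL hLA.
have hL2 : L \in Lfun P 2%:E by exact: L2_lin.
have eX0 : Er P (X 0%N) = Er P L.
  by have := hLA setT (@measurableT _ (g_sigma_algebraType (genX X I1))); rewrite /Er => ->.
have eXj j : (1 <= j < m)%N -> Er P (fun w => X j w * (X 0%N w - L w)) = 0.
  move=> hj; have hj' : (j < m)%N by case/andP: hj.
  have := condexp_mul hg1 (L2_L1 hX0) (L2_L1 hL2) (L2M hX0 (hX hj')) (L2M hL2 (hX hj')) hLA (X_T' hj).
  move=> e; rewrite (Er_ext P (g := fun w => X 0%N w * X j w - L w * X j w)); last first.
    by move=> w; ring.
  by rewrite ErB ?e ?subrr //; [exact: L2M hX0 (hX hj') | exact: L2M hL2 (hX hj')].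
have eZ : Er P (fun w => Z w * (X 0%N w - L w)) = 0.
  have := condexp_mul hg1 (L2_L1 hX0) (L2_L1 hL2) (L2M hX0 hZ2) (L2M hL2 hZ2) hLA (proj1 (wrtE _ _ _) mZ1).
  move=> e; rewrite (Er_ext P (g := fun w => X 0%N w * Z w - L w * Z w)); last first.
    by move=> w; ring.
  by rewrite ErB ?e ?subrr //; [exact: L2M hX0 hZ2 | exact: L2M hL2 hZ2].
rewrite /partial_lin_impact; case: asboolP => [_ // | hne].
suff all0 : forall delta, Hlin1 P m X delta ->
    expectation P (fun w => Y w * delta w) = 0%E.
  have [δ0 hδ0] : exists δ, Hlin1 P m X δ.
    by apply/set0P/eqP.
  rewrite (_ : [set _ | _ in _] = [set 0%E]) ?ereal_sup1 //.
  apply/seteqP; split => [_ [δ hδ <-] | _ ->] /=; first by rewrite all0.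
  by exists δ0 => //; rewrite all0.
move=> _ [[η0 [η ->]] hE0 hE1 hEj].
set δf := fun w => η0 + \sum_(j < m) η j * X j w in hE0 hE1 hEj *.
have hδ2 : δf \in Lfun P 2%:E by exact: L2_linO.
rewrite expE; last exact: L2M hY hδ2.
congr EFin.
have hE0' : Er P δf = 0 by apply: EfE => //; exact: L2_L1.
have hEj' j : (1 <= j < m)%N -> Er P (fun w => X j w * δf w) = 0.
  move=> hj; apply: EfE; last exact: hEj.
  by case/andP: hj => _ hj; exact: L2M (hX hj) hδ2.
have mδ : measurable_fun (setT : set (g_sigma_algebraType (genX X I0))) δf.
  have -> : δf = (fun w => η0 + \sum_(j <- index_iota 0 m) η j * X j w).
    by apply/funext => w; rewrite /δf big_mkord.
  by apply: lin_T' => j; rewrite mem_index_iota.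
have e1 := condexp_mul hg0 (L2_L1 hY) (L2_L1 hZ2) (L2M hY hδ2) (L2M hZ2 hδ2) hZA mδ.
rewrite e1.
pose c0 := η0 + η 0%N * b0.
pose c := fun j => η j + η 0%N * b j.
pose δ' := fun w => c0 + \sum_(1 <= j < m) c j * X j w.
have hδ'2 : δ' \in Lfun P 2%:E by exact: L2_lin.
have hr2 : (fun w => X 0%N w - L w) \in Lfun P 2%:E by exact: L2B.
have hδE w : δf w = δ' w + η 0%N * (X 0%N w - L w).
  rewrite /δf /δ' /L /c0 /c -(big_mkord xpredT (fun j => η j * X j w)) (big_ltn m0) /=.
  under [X in _ = _ + X + _]eq_bigr do rewrite mulrDl -mulrA.
  rewrite big_split /= -mulr_sumr.
  set S1 := \sum_(1 <= j < m) _; set S2 := \sum_(1 <= j < m) _.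
  ring.
have hδ'E : δ' = (fun w => δf w - η 0%N * (X 0%N w - L w)).
  by apply/funext => w; rewrite hδE addrK.
have hδ'0 : Er P δ' = 0.
  by rewrite hδ'E ErB ?ErZ ?hE0' ?ErB -?eX0 ?subrr ?mulr0 ?subrr //;
    first [exact: L2_L1 | apply: L1Z; exact: L2_L1].
have hδ'j j : (1 <= j < m)%N -> Er P (fun w => X j w * δ' w) = 0.
  move=> hj; have hj' : (j < m)%N by case/andP: hj.
  rewrite (Er_ext P (g := fun w => X j w * δf w - η 0%N * (X j w * (X 0%N w - L w)))); last first.
    by move=> w; rewrite hδE; ring.
  rewrite ErB ?ErZ ?hEj' ?eXj ?mulr0 ?subrr //.
  - exact: L2M (hX hj') hr2.
  - exact: L2M (hX hj') hδ2.
  - by apply: L1Z; exact: L2M (hX hj') hr2.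
have hvv : Er P (fun w => δ' w * δ' w) = 0.
  by have := orth_lin hX c0 c hδ'2 hδ'0 hδ'j.
have hZδ' : Er P (fun w => Z w * δ' w) = 0 by exact: Er_ae0 hδ'2 hvv (L2_meas hZ2).
rewrite (Er_ext P (g := fun w => Z w * δ' w + η 0%N * (Z w * (X 0%N w - L w)))); last first.
  by move=> w; rewrite hδE; ring.
rewrite ErD ?ErZ ?hZδ' ?eZ ?mulr0 ?addr0 //.
- exact: L2M hZ2 hr2.
- exact: L2M hZ2 hδ'2.
- by apply: L1Z; exact: L2M hZ2 hr2.
Qed.

Lemma dir_fwd : free_of_confounding P m X ->
  exists (beta0 : R) (beta : nat -> R),
    is_cond_exp P (sigmaX X [set j | (1 <= j < m)%N]) (X 0%N)
      (fun w => beta0 + \sum_(1 <= j < m) beta j * X j w).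
Proof.
move=> hfree.
have [c [hr0 hrj]] := proj_L2 m0 hX.
exists (c 0%N), c.
set L := fun w => c 0%N + \sum_(1 <= j < m) c j * X j w.
have hL2 : L \in Lfun P 2%:E by exact: L2_lin.
have hr2 : (fun w => X 0%N w - L w) \in Lfun P 2%:E by exact: L2B.
split.
- apply/wrtE; apply: lin_T' => j; rewrite mem_index_iota //.
- exact: L1_int (L2_L1 hL2).
move=> A GA; have mA := hg1 GA.
have hY : (\1_A : T -> R) \in Lfun P 2%:E by exact: L2_indic.
suff hAr : Er P (fun w => \1_A w * (X 0%N w - L w)) = 0.
  apply: sube0_eq; rewrite -integralB_EFin //; first last.
  - exact: integrableS measurableT mA (@subsetT _ A) (L1_int (L2_L1 hL2)).
  - exact: integrableS measurableT mA (@subsetT _ A) (L1_int (L2_L1 hX0)).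
  under eq_integral do rewrite -EFinB.
  rewrite int_indic // Er_def; last exact: L2M hr2 hY.
  by rewrite (Er_ext P (g := fun w => \1_A w * (X 0%N w - L w))) ?hAr // => w; rewrite mulrC.
set s2 := Er P (fun w => (X 0%N w - L w) * (X 0%N w - L w)).
have [s20|s2n0] := eqVneq s2 0.
  by apply: Er_ae0 hr2 s20 _; exact: measurable_indic.
have s2ge0 : 0 <= s2.
  rewrite /s2 /Er; apply: fine_ge0; apply: integral_ge0 => x _.
  by rewrite lee_fin -expr2 sqr_ge0.
have s2gt0 : 0 < s2 by rewrite lt_def s2n0 s2ge0.
have inH t : t ^+ 2 * s2 = 1 -> Hlin1 P m X (fun w => t * (X 0%N w - L w)).
  move=> ht; split.
  - exists (- t * c 0%N), (fun j => if j == 0%N then t else - t * c j).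
    apply/funext => w; rewrite /L -(big_mkord xpredT (fun j => (if j == 0%N then t else - t * c j) * X j w)) (big_ltn m0) /= mulrBr mulrDr.
    have e : \sum_(1 <= j < m) (if j == 0%N then t else - t * c j) * X j w =
        - t * \sum_(1 <= j < m) c j * X j w.
      rewrite mulr_sumr; apply: eq_big_nat => j /andP[j1 _].
      by rewrite (negbTE (lt0n_neq0 j1)) mulrA.
    rewrite e.
    set S := \sum_(1 <= j < m) _; ring.
  - rewrite expE; last by apply: L1Z; exact: L2_L1.
    by rewrite ErZ ?hr0 ?mulr0 //; exact: L2_L1.
  - rewrite expE; last first.
      by rewrite (_ : (fun w => _) = (fun w => t * (X 0%N w - L w) * (t * (X 0%N w - L w)))); [exact: L2M (L2Z _ hr2) (L2Z _ hr2) | apply/funext => w; rewrite expr2].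
    rewrite (Er_ext P (g := fun w => t ^+ 2 * ((X 0%N w - L w) * (X 0%N w - L w)))); last first.
      by move=> w; ring.
    by rewrite ErZ -/s2 ?ht //; exact: L2M.
  - move=> j hj; have hj' : (j < m)%N by case/andP: hj.
    rewrite expE; last exact: L2M (hX hj') (L2Z _ hr2).
    rewrite (Er_ext P (g := fun w => t * (X j w * (X 0%N w - L w)))); last first.
      by move=> w; ring.
    by rewrite ErZ ?hrj ?mulr0 //; exact: L2M (hX hj') hr2.
set k := Num.sqrt s2.
have k0 : 0 < k by rewrite sqrtr_gt0.
have kk : k ^+ 2 = s2 by rewrite sqr_sqrtr.
have htk : k^-1 ^+ 2 * s2 = 1 by rewrite exprVn kk mulVf.
have htk' : (- k^-1) ^+ 2 * s2 = 1 by rewrite sqrrN.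
have GA0 : <<s genX X I0 >> A.
  by apply: (sigmaX_mono (I := I1)) => // j /andP[_ ?].
have hce : is_cond_exp P (sigmaX X [set j | (j < m)%N]) (\1_A) (\1_A).
  split => //.
  - apply/wrtE; exact: (@measurable_indic _ (g_sigma_algebraType (genX X I0)) R setT A GA0).
  - exact: L1_int (L2_L1 hY).
have hw1 : measurable_wrt (sigmaX X [set j | (1 <= j < m)%N]) (\1_A : T -> R).
  apply/wrtE; exact: (@measurable_indic _ (g_sigma_algebraType (genX X I1)) R setT A GA).
have hpl := hfree (\1_A) hY (ex_intro _ (\1_A) (And3 hce hw1 hY)).
have hne : Hlin1 P m X <> set0.
  by move=> h0; have := inH _ htk; rewrite h0.
move: hpl; rewrite /partial_lin_impact asboolF // => hsup.
set e := Er P (fun w => \1_A w * (X 0%N w - L w)).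
have ub t : t ^+ 2 * s2 = 1 -> t * e <= 0.
  move=> ht; suff : ((t * e)%:E <= 0)%E by rewrite lee_fin.
  rewrite -hsup.
  have -> : (t * e)%:E = expectation P (fun w => \1_A w * (t * (X 0%N w - L w))).
    rewrite expE; last exact: L2M hY (L2Z _ hr2).
    congr EFin; rewrite /e -ErZ; last exact: L2M hY hr2.
    by apply: Er_ext => w; ring.
  by apply: ereal_sup_ubound; exists (fun w => t * (X 0%N w - L w)) => //; exact: inH.
have u1 := ub _ htk; have u2 := ub _ htk'.
have ki : 0 < k^-1 by rewrite invr_gt0.
rewrite mulNr in u2.
have : e <= 0 by rewrite -(pmulr_rle0 _ ki).
have : 0 <= e by rewrite -(pmulr_rge0 _ ki) -oppr_le0.
lra.
Qed.

End main.

Theorem mainTheorem4_sec (d : measure_display) (T : measurableType d) (R : realType)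
  (P : probability T R) (m : nat) (X : nat -> T -> R)
  (hm : (2 <= m)%N) (hX : forall j, (j < m)%N -> sq_integrable P (X j)) :
  free_of_confounding P m X <->
  exists (beta0 : R) (beta : nat -> R),
    is_cond_exp P (sigmaX X [set j | (1 <= j < m)%N]) (X 0%N)
      (fun w => beta0 + \sum_(1 <= j < m) beta j * X j w).
Proof. by split; [exact: dir_fwd | exact: dir_back]. Qed.

Unset Implicit Arguments.

Theorem mainTheorem4 (d : measure_display) (T : measurableType d) (R : realType)
  (P : probability T R) (m : nat) (X : nat -> T -> R)
  (hm : (2 <= m)%N) (hX : forall j, (j < m)%N -> sq_integrable P (X j)) :
  free_of_confounding P m X <->
  exists (beta0 : R) (beta : nat -> R),
    is_cond_exp P (sigmaX X [set j | (1 <= j < m)%N]) (X 0%N)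
      (fun w => beta0 + \sum_(1 <= j < m) beta j * X j w).
Proof. exact: mainTheorem4_sec hm hX. Qed.
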